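(* Let $p\ge1$, $s\ge r\ge2$, let $Q$ be an $s$-vertex $r$-graph and let $\mathcal P$ be a hereditary property of $r$-graphs. Then $\lambda^{(p)}(Q,\mathcal P)\ge\pi(Q,\mathcal P)$.
   Context: An $r$-graph ($r\ge 2$) is a finite hypergraph all of whose edges have exactly $r$ vertices. For $I\subseteq V(H)$, $H[I]$ denotes the induced subhypergraph on $I$. For an $s$-vertex $r$-graph $Q$ and an $r$-graph $H$, $\mathcal N(Q,H)$ is the number of (not necessarily induced) subgraphs of $H$ isomorphic to $Q$. For an $n$-vertex $r$-graph $H$ with vertex set $[n]$ and $\mathbf x\in\mathbb R^n$, $P_{Q,H}(\mathbf x)=s!\sum_{\{i_1,\dots,i_s\}\in\binom{[n]}{s}}\mathcal N(Q,H[\{i_1,\dots,i_s\}])\,x_{i_1}\cdots x_{i_s}$, and for $p\ge1$, $\lambda^{(p)}(Q,H)=\max_{\|\mathbf x\|_p=1}P_{Q,H}(\mathbf x)$. A hereditary property $\mathcal P$ of $r$-graphs is a family of $r$-graphs closed under isomorphism and under taking induced subgraphs; as a standing assumption, whenever $H\in\mathcal P$, the disjoint union of $H$ with an isolated vertex is also in $\mathcal P$. $\mathcal P_n$ is the set of members of $\mathcal P$ with $n$ vertices. $ex(Q,\mathcal P_n)=\max\{\mathcal N(Q,H):H\in\mathcal P_n\}$ and $\pi(Q,\mathcal P)=\lim_{n\to\infty}ex(Q,\mathcal P_n)/\binom ns$ (this limit exists). $\lambda^{(p)}(Q,\mathcal P_n)=\max\{\lambda^{(p)}(Q,H):H\in\mathcal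 P_n\}$ and $\lambda^{(p)}(Q,\mathcal P)=\lim_{n\to\infty}\lambda^{(p)}(Q,\mathcal P_n)n^{s/p-s}$ (this limit exists). *)

(* Defs.v *)
From HB Require Import structures.
From mathcomp Require Import all_boot all_order all_algebra.
From mathcomp Require Import all_classical all_reals all_analysis.
Set Implicit Arguments. Unset Strict Implicit. Unset Printing Implicit Defensive.
Import Order.TTheory GRing.Theory Num.Theory.
Local Open Scope ring_scope.

Definition rgraph_on (n : nat) := {set {set 'I_n}}.

Definition is_rgraph (r n : nat) (H : rgraph_on n) : bool :=
  [forall e in H, #|e| == r].

(* Copies of Q (on 'I_s) in H (on 'I_n): (not necessarily induced) subgraphs
   (V', E') of H isomorphic to Q, recorded as pairs (vertex set, edge set). *)
Definition copies (s n : nat) (Q : rgraph_on s) (H : rgraph_on n)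
  : {set ({set 'I_n} * {set {set 'I_n}})} :=
  [set ((f @: [set: 'I_s]), [set f @: e | e : {set 'I_s} in Q]) |
     f : {ffun 'I_s -> 'I_n} in [set f : {ffun 'I_s -> 'I_n} |
             injectiveb f && [forall e : {set 'I_s} in Q, (f @: e) \in H]]].

(* N(Q, H[S]) : the number of copies of Q in the induced subgraph H[S],
   i.e. the copies of Q in H whose vertex set lies inside S. *)
Definition Ncount_in (s n : nat) (Q : rgraph_on s) (H : rgraph_on n)
  (S : {set 'I_n}) : nat :=
  #|[set c in copies Q H | c.1 \subset S]|.

Definition Ncount (s n : nat) (Q : rgraph_on s) (H : rgraph_on n) : nat :=
  Ncount_in Q H [set: 'I_n].

Definition PQH {R : realType} (s n : nat) (Q : rgraph_on s) (H : rgraph_on n)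
  (x : 'I_n -> R) : R :=
  (s`!)%:R * \sum_(S : {set 'I_n} | #|S| == s)
                 (Ncount_in Q H S)%:R * \prod_(i in S) x i.

Definition pnorm {R : realType} (n : nat) (p : R) (x : 'I_n -> R) : R :=
  (\sum_(i < n) `|x i| `^ p) `^ p^-1.

(* lambda^(p)(Q, H) = max_{||x||_p = 1} P_{Q,H}(x)  (the max exists by
   compactness, so it equals the supremum) *)
Definition lambdaQH {R : realType} (p : R) (s n : nat) (Q : rgraph_on s)
  (H : rgraph_on n) : R :=
  sup [set PQH Q H x | x in [set x : 'I_n -> R | pnorm p x = 1]].

(* A hereditary property of r-graphs: for each n, a predicate on r-graphs on
   'I_n; members are r-graphs; closed under isomorphism and taking induced
   subgraphs (both captured by: the pull-back of H along any injection
   'I_m -> 'I_n is again in the property); and closed under adding an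
   isolated vertex (standing assumption). *)
Definition pullback (m n : nat) (f : 'I_m -> 'I_n) (H : rgraph_on n)
  : rgraph_on m := [set e : {set 'I_m} | f @: e \in H].

Definition add_isolated (n : nat) (H : rgraph_on n) : rgraph_on n.+1 :=
  [set (@widen_ord n n.+1 (leqnSn n)) @: e | e : {set 'I_n} in H].

Definition hereditary_property (r : nat) (P : forall n, pred (rgraph_on n))
  : Prop :=
  [/\ (forall n (H : rgraph_on n), P n H -> is_rgraph r H),
      (forall m n (f : 'I_m -> 'I_n) (H : rgraph_on n),
          injective f -> P n H -> P m (pullback f H)) &
      (forall n (H : rgraph_on n), P n H -> P n.+1 (add_isolated H))].

Definition exQP (s : nat) (Q : rgraph_on s) (P : forall n, pred (rgraph_on n))
  (n : nat) : nat :=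
  \max_(H : rgraph_on n | P n H) Ncount Q H.

Definition lambdaQPn {R : realType} (p : R) (s : nat) (Q : rgraph_on s)
  (P : forall n, pred (rgraph_on n)) (n : nat) : R :=
  \big[Num.max/0]_(H : rgraph_on n | P n H) lambdaQH p Q H.

(* the normalized sequences whose limits define pi(Q,P) and lambda^(p)(Q,P) *)
Definition pi_seq {R : realType} (s : nat) (Q : rgraph_on s)
  (P : forall n, pred (rgraph_on n)) (n : nat) : R :=
  (exQP Q P n)%:R / ('C(n, s))%:R.

Definition lambda_seq {R : realType} (p : R) (s : nat) (Q : rgraph_on s)
  (P : forall n, pred (rgraph_on n)) (n : nat) : R :=
  lambdaQPn p Q P n * (n%:R `^ (s%:R / p - s%:R)).

(* Main.v *)
Require Import Defs.
From HB Require Import structures.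
From mathcomp Require Import all_boot all_order all_algebra.
From mathcomp Require Import all_classical all_reals all_analysis.
From mathcomp Require Import ring lra.
Import Order.TTheory GRing.Theory Num.Theory.
Import numFieldNormedType.Exports.
Local Open Scope ring_scope.
Local Open Scope classical_set_scope.
Set Implicit Arguments. Unset Strict Implicit.
Lemma copies_card (s n : nat) (Q : rgraph_on s) (H : rgraph_on n) c :
  c \in copies Q H -> #|c.1| = s.
Proof.
case/imsetP => f; rewrite inE => /andP[/injectiveP fi _] -> /=.
by rewrite card_imset // cardsT card_ord.
Qed.

Lemma Ncount_E (s n : nat) (Q : rgraph_on s) (H : rgraph_on n) :
  Ncount Q H = #|copies Q H|.
Proof.
rewrite /Ncount /Ncount_in; apply: eq_card => c.
rewrite !inE; have -> : c.1 \subset [set: 'I_n]%SET by apply/fintype.subsetP => x; rewrite finset.in_setT.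
by rewrite andbT.
Qed.

Lemma count_le (s n : nat) (Q : rgraph_on s) (H : rgraph_on n) :
  (Ncount Q H <= \sum_(S : {set 'I_n} | #|S| == s) Ncount_in Q H S)%N.
Proof.
have E S : Ncount_in Q H S = \sum_(c in copies Q H) (c.1 \subset S : nat).
  rewrite /Ncount_in -sum1_card [RHS]big_mkcond [LHS]big_mkcond /=.
  by apply: eq_bigr => c _; rewrite !inE; case: (c \in _); case: (_ \subset _).
under eq_bigr => S _ do rewrite E.
rewrite Ncount_E -sum1_card exchange_big /=.
apply: leq_sum => c cA.
rewrite (bigD1 c.1) /=; last by rewrite (@copies_card _ _ Q H c cA).
by rewrite subxx.
Qed.
Lemma pnorm_le1 (R : realType) (p : R) n (x : 'I_n -> R) :
  1 <= p -> pnorm p x = 1 -> forall i, `|x i| <= 1.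
Proof.
move=> p1 hx i; rewrite leNgt; apply/negP => hi.
have p0 : 0 < p by apply: (lt_le_trans ltr01 p1).
have h1 : 1 < `|x i| `^ p.
  have e1 : (1:R) `^ p = 1 by rewrite powR1.
  by rewrite -{1}e1 gt0_ltr_powR // ?nnegrE ?normr_ge0.
set a := \sum_(j < n) `|x j| `^ p.
have ha : 1 < a.
  apply: (lt_le_trans h1); rewrite /a (bigD1 i) //= lerDl.
  by apply: sumr_ge0 => j _; exact: powR_ge0.
have : 1 < a `^ p^-1.
  have e1 : (1:R) `^ p^-1 = 1 by rewrite powR1.
  rewrite -{1}e1 gt0_ltr_powR // ?nnegrE ?invr_gt0 //; exact: ltW (lt_trans ltr01 ha).
by rewrite /a -/(pnorm p x) hx ltxx.
Qed.

Lemma lambda_ge (R : realType) (p : R) s n (Q : rgraph_on s) (H : rgraph_on n)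
  (x : 'I_n -> R) : 1 <= p -> pnorm p x = 1 -> PQH Q H x <= lambdaQH p Q H.
Proof.
move=> p1 hx; apply: ub_le_sup; last by exists x.
exists ((s`!)%:R * \sum_(S : {set 'I_n} | #|S| == s) (Ncount_in Q H S)%:R).
move=> _ [y hy <-]; rewrite /PQH.
apply: ler_wpM2l => //; apply: ler_sum => S _.
apply: ler_piMr => //.
apply: (le_trans (ler_norm _)); rewrite normr_prod.
apply: prodr_ile1 => i _; rewrite normr_ge0 /=.
exact: (pnorm_le1 p1 hy i).
Qed.

Lemma pnorm_u (R : realType) (p : R) n : (0 < n)%N -> 0 < p ->
  pnorm p (fun _ : 'I_n => n%:R `^ (- p^-1)) = 1.
Proof.
move=> n0 p0; rewrite /pnorm.
have -> : \sum_(i < n) `|n%:R `^ (- p^-1) : R| `^ p = 1.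
  rewrite sumr_const card_ord ger0_norm ?powR_ge0 // -powRrM mulNr.
  have -> : p^-1 * p = 1 by rewrite mulVf // gt_eqF.
  rewrite powR_inv1 // -(mulr_natr (n%:R)^-1 n) mulVf // pnatr_eq0 -lt0n //.
by rewrite powR1.
Qed.

Lemma PQH_u (R : realType) (p : R) s n (Q : rgraph_on s) (H : rgraph_on n) :
  PQH Q H (fun _ : 'I_n => n%:R `^ (- p^-1)) =
  (s`!)%:R * (n%:R `^ (- p^-1)) ^+ s * \sum_(S : {set 'I_n} | #|S| == s) (Ncount_in Q H S)%:R.
Proof.
rewrite /PQH -mulrA; congr (_ * _); rewrite mulr_sumr; apply: eq_bigr => S /eqP hS.
by rewrite prodr_const hS mulrC.
Qed.

Lemma exp_combine (R : realType) (p : R) s n : (0 < n)%N -> 0 < p ->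
  (n%:R `^ (- p^-1)) ^+ s * n%:R `^ (s%:R / p - s%:R) = (n%:R ^+ s : R)^-1.
Proof.
move=> n0 p0.
have nn0 : (n%:R : R) != 0 by rewrite pnatr_eq0 -lt0n.
rewrite -powR_mulrn ?powR_ge0 // -powRrM -powRD; last by rewrite nn0 implybT.
have -> : - p^-1 * s%:R + (s%:R / p - s%:R) = - (s%:R : R) by rewrite mulNr mulrC; ring.
by rewrite powRN powR_mulrn.
Qed.
Lemma inv_cvg0 (R : realType) : (fun n : nat => (n%:R : R)^-1) @ \oo --> 0.
Proof.
rewrite -cvg_shiftS; exact: cvg_harmonic.
Qed.

Lemma ratio_cvg1 (R : realType) (k : nat) :
  (fun n : nat => ((n - k)%:R : R) / n%:R) @ \oo --> (1:R).
Proof.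
have h : (fun n : nat => 1 - k%:R * (n%:R : R)^-1) @ \oo --> (1 - k%:R * 0 : R).
  apply: cvgB; first exact: cvg_cst.
  by apply: cvgMr; exact: inv_cvg0.
rewrite mulr0 subr0 in h.
apply: (cvg_trans _ h); apply: near_eq_cvg; near=> n.
have kn : (k <= n)%N by near: n; exists k.
have n0 : (0 < n)%N by near: n; exists 1%N.
rewrite natrB // mulrBl mulfV // pnatr_eq0 -lt0n //.
Unshelve. all: by end_near. Qed.

Lemma ffact_cvg1 (R : realType) (k : nat) :
  (fun n : nat => ((n ^_ k)%:R : R) / (n%:R ^+ k)) @ \oo --> (1:R).
Proof.
elim: k => [|k IH].
  under eq_fun => n do rewrite ffactn0 expr0 divr1.
  exact: cvg_cst.
have -> : (fun n : nat => ((n ^_ k.+1)%:R : R) / (n%:R ^+ k.+1)) =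
  (fun n => (((n ^_ k)%:R : R) / (n%:R ^+ k)) * (((n - k)%:R : R) / n%:R)).
  apply: funext => n; rewrite ffactnSr natrM exprSr invfM; ring.
have HH := cvgM IH (ratio_cvg1 (R:=R) k); rewrite mulr1 in HH; exact: HH.
Qed.

Lemma key (R : realType) (p : R) (s : nat) (Q : rgraph_on s)
  (P : forall n, pred (rgraph_on n)) n :
  1 <= p -> (0 < n)%N -> (s <= n)%N ->
  pi_seq (R:=R) Q P n * (((n ^_ s)%:R : R) / (n%:R ^+ s)) <= lambda_seq p Q P n.
Proof.
move=> p1 n0 sn.
have p0 : 0 < p by apply: (lt_le_trans ltr01 p1).
have nn0 : (n%:R : R) != 0 by rewrite pnatr_eq0 -lt0n.
have ns0 : (n%:R ^+ s : R) != 0 by rewrite expf_neq0.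
have C0 : ('C(n, s)%:R : R) != 0 by rewrite pnatr_eq0 -lt0n bin_gt0.
rewrite /pi_seq /lambda_seq.
set c : R := (s`!)%:R / (n%:R ^+ s).
set e : R := n%:R `^ (s%:R / p - s%:R).
have e0 : 0 <= e by apply: powR_ge0.
have -> : (exQP Q P n)%:R / 'C(n, s)%:R * ((n ^_ s)%:R / n%:R ^+ s) =
          c * (exQP Q P n)%:R.
  rewrite -bin_ffact natrM /c; field.
  by rewrite C0 ns0.
rewrite /exQP.
apply: (big_ind (fun k => c * k%:R <= lambdaQPn p Q P n * e)).
- rewrite mulr0; apply: mulr_ge0 => //.
  exact: bigmax_ge_id.
- move=> a b ha hb; rewrite /maxn; by case: ltnP.
move=> H PH.
apply: (@le_trans _ _ (lambdaQH p Q H * e)); last first.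
  by apply: ler_wpM2r => //; apply: le_bigmax_cond.
apply: (le_trans _ (ler_wpM2r e0 (lambda_ge Q H p1 (pnorm_u n0 p0)))).
rewrite PQH_u.
have -> : (s`!)%:R * (n%:R `^ (- p^-1)) ^+ s *
   (\sum_(S : {set 'I_n} | #|S| == s) (Ncount_in Q H S)%:R) * e =
   (s`!)%:R * (\sum_(S : {set 'I_n} | #|S| == s) (Ncount_in Q H S)%:R) *
   ((n%:R `^ (- p^-1)) ^+ s * e).
  by rewrite -!mulrA; congr (_ * _); exact: mulrCA.
rewrite /e exp_combine // /c.
have -> : (s`!)%:R / n%:R ^+ s * (Ncount Q H)%:R =
   (s`!)%:R * (Ncount Q H)%:R * (n%:R ^+ s : R)^-1 by rewrite mulrAC.
apply: ler_wpM2r; first by rewrite invr_ge0 exprn_ge0.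
apply: ler_wpM2l => //.
by rewrite -natr_sum ler_nat count_le.
Qed.

Theorem mainTheorem3 (R : realType) (p : R) (r s : nat)
  (Q : rgraph_on s) (P : forall n, pred (rgraph_on n)) (piQP lamQP : R) :
  1 <= p -> (2 <= r)%N -> (r <= s)%N -> is_rgraph r Q ->
  hereditary_property r P ->
  (* pi(Q,P) = lim_n ex(Q,P_n) / C(n,s) *)
  pi_seq (R:=R) Q P @ \oo --> piQP ->
  (* lambda^(p)(Q,P) = lim_n lambda^(p)(Q,P_n) n^(s/p - s) *)
  lambda_seq p Q P @ \oo --> lamQP ->
  piQP <= lamQP.
Proof.
move=> p1 _ _ _ _ hpi hlam.
have hf := cvgM hpi (ffact_cvg1 (R:=R) s); rewrite mulr1 in hf.
apply: (ler_cvg_to (hf _) hlam).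
near=> n; apply: key => //.
  by near: n; exists 1%N.
by near: n; exists s.
Unshelve. all: by end_near. Qed.
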